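(* Let $L$ be a Latin array of order $n$. If $L$ has at least $(229n^2+27n)/256$ distinct symbols, then $L$ has a transversal.
   Context: An array of order $n$ is an $n\times n$ array with a symbol in each cell; an entry is a triple $(i,j,A_{ij})$. An array is Latin if no symbol appears more than once in any row or column. A transversal of an $n\times n$ array is a set of $n$ entries, no two of which agree in row, column, or symbol. *)

(* Defs.v *)
From mathcomp Require Import all_boot all_fingroup.
Set Implicit Arguments. Unset Strict Implicit. Unset Printing Implicit Defensive.

Definition array (T : eqType) (n : nat) := 'I_n -> 'I_n -> T.

Definition latin (T : eqType) (n : nat) (L : array T n) : Prop :=
  (forall i, injective (L i)) /\ (forall j, injective (fun i => L i j)).

Definition nsymbols (T : eqType) (n : nat) (L : array T n) : nat :=
  size (undup [seq L i j | i <- enum 'I_n, j <- enum 'I_n]).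

(* A transversal: n entries (i, s i, L i (s i)) with distinct rows (one per row),
   distinct columns (s a permutation) and distinct symbols. *)
Definition has_transversal (T : eqType) (n : nat) (L : array T n) : Prop :=
  exists s : {perm 'I_n}, injective (fun i => L i (s i)).

(* Main.v *)
Require Import Defs.
From mathcomp Require Import all_boot all_fingroup.
Set Implicit Arguments. Unset Strict Implicit. Unset Printing Implicit Defensive.
Lemma iterop_addn c y : iterop c addn y 0 = c * y.
Proof. by case: c => [|c] //; rewrite iteropS iter_addn mulSn addnC mulnC. Qed.
Lemma sum_undup (T : eqType) (r : seq T) (F : T -> nat) :
  \sum_(x <- r) F x = \sum_(x <- undup r) count_mem x r * F x.
Proof.
rewrite -big_undup_iterop_count; apply: eq_bigr => x _.
exact: iterop_addn.
Qed.
Lemma count_sumE (T : Type) (a : pred T) (s : seq T) : count a s = \sum_(x <- s) a x.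
Proof. by elim: s => [|x s IH]; rewrite ?big_nil ?big_cons //= IH. Qed.

Lemma dbl_undup (T : eqType) (r : seq T) :
  2 * size (undup r) <= size r + count (fun x => count_mem x r == 1) r.
Proof.
rewrite -[size r]sum1_size -[size (undup r)]sum1_size count_sumE.
rewrite (sum_undup r (fun _ => 1)) (sum_undup r (fun x => (count_mem x r == 1):nat)) -big_split /=.
rewrite big_distrr /= big_seq [X in _ <= X]big_seq.
apply: leq_sum => x; rewrite mem_undup => xr.
have : 0 < count_mem x r by rewrite lt0n; apply/eqP => /count_memPn; rewrite xr.
move: (count_mem x r) => c; case: c => [|[|c]] _ //.

Qed.

Lemma card_count (C : finType) (P : pred C) : #|[pred x | P x]| = count P (enum C).
Proof. by rewrite cardE -size_filter enumT /enum_mem. Qed.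

Section Arr.
Variables (T : eqType) (n : nat) (L : array T n).

Definition good (i j : 'I_n) : bool :=
  [forall p, forall q, ((p != i) || (q != j)) ==> (L p q != L i j)].

Lemma goodP i j : reflect (forall p q, L p q = L i j -> p = i /\ q = j) (good i j).
Proof.
apply: (iffP forallP) => [H p q E|H p].
  move: (H p) => /forallP /(_ q) /implyP; rewrite E eqxx /= => H2.
  by have /norP [/negPn/eqP -> /negPn/eqP ->] : ~~ ((p != i) || (q != j)) by apply/negP => /H2.
apply/forallP => q; apply/implyP => /orP H1; apply/eqP => /H [pi qj].
by case: H1; rewrite ?pi ?qj eqxx.
Qed.

Definition gr i := #|[set q | good i q]|.
Definition gc j := #|[set p | good p j]|.
Definition symc := [seq L c.1 c.2 | c <- enum {: 'I_n * 'I_n}].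

Lemma mem_symc y : (y \in symc) = [exists c : 'I_n * 'I_n, L c.1 c.2 == y].
Proof.
apply/mapP/existsP => [[c _ ->]|[c /eqP <-]]; first by exists c.
by exists c; rewrite ?mem_enum.
Qed.

Lemma mem_syms y : (y \in [seq L i j | i <- enum 'I_n, j <- enum 'I_n]) = [exists c : 'I_n * 'I_n, L c.1 c.2 == y].
Proof.
apply/allpairsP/existsP => [[c [_ _ ->]]|[c /eqP <-]]; first by exists c.
by exists c; rewrite !mem_enum.
Qed.

Lemma nsymE : nsymbols L = size (undup symc).
Proof.
apply: perm_size; apply: uniq_perm; rewrite ?undup_uniq // => y.
by rewrite !mem_undup mem_symc mem_syms.
Qed.

Definition goodset := [set c : 'I_n * 'I_n | good c.1 c.2].

Lemma count_symc (c : 'I_n * 'I_n) : (count_mem (L c.1 c.2) symc == 1) = good c.1 c.2.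
Proof.
rewrite count_map -card_count (cardD1 c) !inE eqxx add1n eqSS.
apply/idP/goodP => [/eqP/card0_eq H p q E|H].
  move: (H (p, q)); rewrite !inE /= E eqxx andbT.
  by case: (eqVneq (p, q) c) => [<-|] //.
apply/eqP/eq_card0 => [[p q]]; rewrite !inE /=.
apply/negbTE; rewrite negb_and negbK; apply/orP; case: (eqVneq (L p q) (L c.1 c.2)) => E; last by right.
by left; case: (H p q E) => -> ->; rewrite -surjective_pairing eqxx.
Qed.

Lemma two_k : 2 * nsymbols L <= n * n + #|goodset|.
Proof.
rewrite nsymE; apply: leq_trans (dbl_undup symc) _.
rewrite size_map -cardE card_prod !card_ord leq_add2l.
rewrite count_map -card_count; apply: subset_leq_card; apply/subsetP => c.
by rewrite !inE /= count_symc.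
Qed.

End Arr.

From mathcomp Require Import zify.

Lemma caseA (T : eqType) (m : nat) (L : array T m.+1) (i j : 'I_m.+1) :
  latin L -> good L i j ->
  (forall L' : array T m, latin L' -> 229 * m ^ 2 + 27 * m <= 256 * nsymbols L' -> has_transversal L') ->
  229 * m.+1 ^ 2 + 27 * m.+1 <= 256 * nsymbols L ->
  256 * gr L i <= 202 * m + 256 -> has_transversal L.
Proof.
move=> [Lr Lc] gij IH H Hg.
pose L' : array T m := fun a b => L (lift i a) (lift j b).
have latL' : latin L'.
  split=> [a x y /= E|b x y /= E].
    exact: (lift_inj (Lr _ _ _ E)).
  exact: (lift_inj (Lc (lift j b) _ _ E)).
have Hk : nsymbols L <= nsymbols L' + gr L i + m.
  rewrite (nsymE L) (nsymE L').
  pose G := [seq L i q | q <- enum [set q | good L i q]].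
  pose C := [seq L p j | p <- enum [set~ i]].
  have e1 : size C = m by rewrite size_map -cardE cardsC1 card_ord.
  have e2 : size G = gr L i by rewrite size_map -cardE.
  have sub : {subset undup (symc L) <= undup (symc L') ++ G ++ C}; last first.
    by apply: leq_trans (uniq_leq_size (undup_uniq _) sub) _; rewrite !size_cat e1 e2 addnA.
  move=> y; rewrite mem_undup mem_symc => /existsP [[p q] /eqP <-] /=.
  rewrite !mem_cat mem_undup mem_symc.
  have inG q' : good L i q' -> L i q' \in G by move=> g; apply/mapP; exists q'; rewrite ?mem_enum ?inE.
  have inC p' : p' != i -> L p' j \in C by move=> g; apply/mapP; exists p'; rewrite ?mem_enum ?inE.
  have inL' a b : [exists c : 'I_m * 'I_m, L' c.1 c.2 == L (lift i a) (lift j b)].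
    by apply/existsP; exists (a, b).
  case: (unliftP j q) => [b ->|->].
    case: (unliftP i p) => [a ->|->]; first by rewrite inL'.
    case: (boolP (good L i (lift j b))) => [g|ng]; first by rewrite inG ?orbT.
    have [p' [q' [E1 E2]]] : exists p' q', L p' q' = L i (lift j b) /\ ((p' != i) || (q' != lift j b)).
      move: ng; rewrite /good negb_forall => /existsP [p' ]; rewrite negb_forall => /existsP [q'].
      by rewrite negb_imply negbK => /andP [H1 /eqP H2]; exists p', q'.
    have pi : p' != i.
      apply/negP => /eqP pi; move: E2 E1; rewrite pi eqxx /= => /negP E2 /(Lr i) E1.
      by apply: E2; rewrite E1.
    case: (unliftP i p') pi E1 => [a ->|->]; rewrite ?eqxx // => _ E1.
    case: (unliftP j q') E1 => [b' ->|->] E1; first by rewrite -E1 inL'.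
    by rewrite -E1 inC ?orbT // eq_sym neq_lift.
  case: (eqVneq p i) => [->|pi]; first by rewrite inG ?orbT.
  by rewrite inC ?orbT.
have [s Hs] : has_transversal L'.
  apply: IH latL' _.
  rewrite !expnS expn0 !muln1 in H *.
  nia.
have gP := elimT (goodP L i j) gij.
exists (lift_perm i j s) => x y.
case: (unliftP i x) => [a ->|->]; case: (unliftP i y) => [b ->|->];
  rewrite ?lift_perm_lift ?lift_perm_id //.
- by move/Hs => ->.
- by move=> E; case: (gP _ _ E) => /eqP; rewrite eq_sym (negbTE (neq_lift _ _)).
- by move=> E; case: (gP _ _ (esym E)) => /eqP; rewrite eq_sym (negbTE (neq_lift _ _)).
Qed.

Definition trA (T : eqType) (n : nat) (L : array T n) : array T n := fun i j => L j i.

Lemma latin_tr (T : eqType) (n : nat) (L : array T n) : latin L -> latin (trA L).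
Proof. by case=> Lr Lc; split=> [i|j] x y /=; [apply: Lc|apply: Lr]. Qed.

Lemma nsym_tr (T : eqType) (n : nat) (L : array T n) : nsymbols (trA L) = nsymbols L.
Proof.
rewrite !nsymE; apply: perm_size; apply: uniq_perm; rewrite ?undup_uniq // => y.
rewrite !mem_undup !mem_symc; apply/existsP/existsP => [[[p q] E]|[[p q] E]].
  by exists (q, p).
by exists (q, p).
Qed.

Lemma good_tr (T : eqType) (n : nat) (L : array T n) i j : good (trA L) i j = good L j i.
Proof.
apply/goodP/goodP => H p q E.
  by case: (H q p E) => -> ->.
by case: (H q p E) => -> ->.
Qed.

Lemma gr_tr (T : eqType) (n : nat) (L : array T n) j : gr (trA L) j = gc L j.
Proof. by rewrite /gr /gc; apply: eq_card => p; rewrite !inE good_tr. Qed.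

Lemma trans_tr (T : eqType) (n : nat) (L : array T n) :
  has_transversal (trA L) -> has_transversal L.
Proof.
case=> s Hs; exists s^-1%g => x y E.
apply: (perm_inj (s := s^-1%g)); apply: Hs; rewrite /trA !permKV; exact: E.
Qed.

Section CaseB.
Variables (T : eqType) (n : nat) (L : array T n).
Hypothesis (Lr : forall i, injective (L i)) (Lc : forall j, injective (fun i => L i j)).

Definition ok (s : {perm 'I_n}) i := [forall j, (j != i) ==> (L j (s j) != L i (s i))].
Definition okset s := [set i | ok s i].
Definition gset (s : {perm 'I_n}) := [set i | good L i (s i)].
Definition Q s := n.+1 * #|okset s| + #|gset s|.

Lemma Q_lt1 s s' : okset s \proper okset s' -> Q s < Q s'.
Proof.
move=> /proper_card H; rewrite /Q.
have := max_card (mem (gset s)); rewrite card_ord => H2.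
have H3 : n.+1 * #|okset s|.+1 <= n.+1 * #|okset s'| by rewrite leq_mul2l H orbT.
rewrite mulnS addnC in H3.
apply: (@leq_trans (n.+1 * #|okset s| + n.+1)); first by rewrite -addnS leq_add2l ltnS.
exact: leq_trans H3 (leq_addr _ _).
Qed.

Lemma Q_lt2 s s' : okset s \subset okset s' -> gset s \proper gset s' -> Q s < Q s'.
Proof.
move=> /subset_leq_card H /proper_card H2; rewrite /Q.
have H3 : n.+1 * #|okset s| <= n.+1 * #|okset s'| by rewrite leq_mul2l H orbT.
by rewrite -addnS; exact: leq_add H3 H2.
Qed.

Lemma fresh_good (s : {perm 'I_n}) a b w : good L a b -> s a != b -> L w (s w) != L a b.
Proof.
move=> /goodP g sab; apply/eqP => /g [wa sb]; move: sab; by rewrite -wa sb eqxx.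
Qed.

Lemma good_ok (s : {perm 'I_n}) i : good L i (s i) -> ok s i.
Proof.
move=> /goodP g; apply/forallP => j; apply/implyP => ji; apply/eqP => /g [E _].
by move: ji; rewrite E eqxx.
Qed.

Lemma update (s s' : {perm 'I_n}) (X : {set 'I_n}) :
  (forall i, i \notin X -> s' i = s i) ->
  (forall i w, i \in X -> L w (s w) != L i (s' i)) ->
  (forall i j, i \in X -> j \in X -> i != j -> L i (s' i) != L j (s' j)) ->
  okset s \subset okset s' /\ X \subset okset s'.
Proof.
move=> same fr dis; split; apply/subsetP => i; rewrite !inE.
  case: (boolP (i \in X)) => iX.
    move=> _; apply/forallP => j; apply/implyP => ji.
    case: (boolP (j \in X)) => jX; first by rewrite dis.
    by rewrite (same _ jX) fr.
  move=> /forallP okA; apply/forallP => j; apply/implyP => ji.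
  rewrite (same _ iX); case: (boolP (j \in X)) => jX; first by rewrite eq_sym fr.
  by rewrite (same _ jX); move/implyP: (okA j); apply.
move=> iX; apply/forallP => j; apply/implyP => ji.
case: (boolP (j \in X)) => jX; first by rewrite dis.
by rewrite (same _ jX) fr.
Qed.

Lemma exists_diff (A B : {set 'I_n}) : #|B| < #|A| -> exists x, x \in A /\ x \notin B.
Proof.
move=> H; case: (boolP (A \subset B)) => [/subset_leq_card|/subsetPn [x xA xB]].
  by rewrite leqNgt H.
by exists x.
Qed.

Lemma nf_card (s : {perm 'I_n}) (F : 'I_n -> T) : injective F ->
  (forall v w, L w (s w) = F v -> ~~ good L w (s w)) ->
  #|[set v | [exists w, L w (s w) == F v]]| <= #|~: gset s|.
Proof.
move=> Finj Hb; set NF := [set v | _].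
pose f v := odflt v [pick w | L w (s w) == F v].
have fP v : v \in NF -> L (f v) (s (f v)) = F v.
  rewrite inE => /existsP [w0 Hw0]; rewrite /f.
  by case: pickP => [w /eqP //|/(_ w0)]; rewrite Hw0.
rewrite -(card_in_imset (f := f)); last first.
  by move=> x y xN yN E; apply: Finj; rewrite -(fP _ xN) -(fP _ yN) E.
apply: subset_leq_card; apply/subsetP => _ /imsetP [v vN ->].
by rewrite !inE; apply: (Hb v); apply: fP.
Qed.

Lemma good_ne a b p q : good L a b -> p != a -> L p q != L a b.
Proof. by move=> /goodP g pa; apply/eqP => /g [E _]; move: pa; rewrite E eqxx. Qed.

Lemma s'vals (s : {perm 'I_n}) w v : w != v ->
  let s' := (tperm w v * s)%g in
  [/\ s' w = s v, s' v = s w & forall x, x \notin [set w; v] -> s' x = s x].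
Proof.
move=> wv /=; split; rewrite ?permM ?tpermL ?tpermR // => x.
by rewrite !inE negb_or => /andP [xw xv]; rewrite permM tpermD // eq_sym.
Qed.

Lemma move1 (s : {perm 'I_n}) w : ~~ good L w (s w) -> n < gr L w + gc L (s w) ->
  exists s', Q s < Q s'.
Proof.
move=> bw H.
pose A := s @^-1: [set q | good L w q].
pose B := [set v | good L v (s w)].
have cA : #|A| = gr L w by rewrite card_preimset //; exact: perm_inj.
have cB : #|B| = gc L (s w) by [].
have [v vAB] : exists v, v \in A :&: B.
  apply/card_gt0P; have := cardsUI A B; have := subset_leq_card (subsetT (A :|: B)); rewrite cardsT card_ord; move=> h1 h2.
  have : n < n + #|A :&: B| by apply: leq_trans H _; rewrite -cA -cB -h2 leq_add2r h1.
  by rewrite -{1}[n]addn0 ltn_add2l.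
move: vAB; rewrite !inE => /andP [g1 g2].
have vw : v != w by apply/eqP => E; move: g1; rewrite E (negbTE bw).
have wv : w != v by rewrite eq_sym.
case: (s'vals s wv) => s'w s'v s'o.
set s' := (tperm w v * s)%g in s'w s'v s'o.
have [Hok _] : okset s \subset okset s' /\ [set w; v] \subset okset s'.
  apply: update => //.
  - move=> i w'; rewrite !inE => /orP [] /eqP ->; rewrite ?s'w ?s'v.
      by apply: fresh_good g1 _; rewrite (inj_eq perm_inj).
    by apply: fresh_good g2 _; rewrite (inj_eq perm_inj).
  - move=> i j; rewrite !inE => /orP [] /eqP -> /orP [] /eqP ->; rewrite ?eqxx // => _;
      rewrite ?s'w ?s'v.
      by rewrite eq_sym good_ne.
    by rewrite eq_sym good_ne.
have Hg : gset s \proper gset s'.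
  apply/properP; split; last by exists w; rewrite !inE ?s'w.
  apply/subsetP => x; rewrite !inE.
  case: (boolP (x \in [set w; v])) => [|xX]; last by rewrite s'o.
  by rewrite !inE => /orP [] /eqP -> _; rewrite ?s'w ?s'v.
by exists s'; apply: Q_lt2.
Qed.

Lemma bad_of_notok (s : {perm 'I_n}) u : ~~ ok s u -> ~~ good L u (s u).
Proof. by apply: contra; apply: good_ok. Qed.

Lemma nfc_card (s : {perm 'I_n}) u : ~~ good L u (s u) ->
  #|[set v | [exists w, L w (s w) == L v (s u)]]| <= #|~: gset s|.
Proof.
move=> bu; apply: (nf_card (F := fun v => L v (s u))) => [x y /Lc //|v w E].
case: (eqVneq w v) => [wv|wv].
  by move: E; rewrite wv => /Lr /perm_inj ->.
have vw : v != w by rewrite eq_sym.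
by apply/negP => g; move: (good_ne (s u) g vw); rewrite E eqxx.
Qed.

Lemma nfr_card (s : {perm 'I_n}) u : ~~ good L u (s u) ->
  #|[set v | [exists w, L w (s w) == L u (s v)]]| <= #|~: gset s|.
Proof.
move=> bu; apply: (nf_card (F := fun v => L u (s v))) => [x y /Lr /perm_inj //|v w E].
case: (eqVneq w u) => [->//|wu].
have uw : u != w by rewrite eq_sym.
by apply/negP => g; move: (good_ne (s v) g uw); rewrite E eqxx.
Qed.

Lemma move2 (s : {perm 'I_n}) u : ~~ ok s u -> #|~: gset s| < gr L u ->
  exists s', Q s < Q s'.
Proof.
move=> nu H; have bu := bad_of_notok nu.
pose A := s @^-1: [set q | good L u q].
have cA : #|A| = gr L u by rewrite card_preimset //; exact: perm_inj.
have [v [vA vN]] := exists_diff (leq_ltn_trans (nfc_card bu) (leq_trans H (eq_leq (esym cA)))).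
move: vA vN; rewrite !inE negb_exists => g /forallP vN.
have vu : v != u by apply/eqP => E; move: g; rewrite E (negbTE bu).
have uv : u != v by rewrite eq_sym.
case: (s'vals s uv) => s'u s'v s'o.
set s' := (tperm u v * s)%g in s'u s'v s'o.
have [Hok HX] : okset s \subset okset s' /\ [set u; v] \subset okset s'.
  apply: update => //.
  - move=> i w'; rewrite !inE => /orP [] /eqP ->; rewrite ?s'u ?s'v.
      by apply: fresh_good g _; rewrite (inj_eq perm_inj).
    exact: vN.
  - move=> i j; rewrite !inE => /orP [] /eqP -> /orP [] /eqP ->; rewrite ?eqxx // => _;
      rewrite ?s'u ?s'v.
      by rewrite eq_sym good_ne.
    by rewrite good_ne.
exists s'; apply: Q_lt1; apply/properP; split => //; exists u.
  by apply: (subsetP HX); rewrite !inE eqxx.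
by rewrite inE.
Qed.

Lemma move3 (s : {perm 'I_n}) u : ~~ ok s u -> #|~: gset s| < gc L (s u) ->
  exists s', Q s < Q s'.
Proof.
move=> nu H; have bu := bad_of_notok nu.
have [v [vA vN]] := exists_diff (leq_ltn_trans (nfr_card bu) H).
move: vA vN; rewrite !inE negb_exists => g /forallP vN.
have vu : v != u by apply/eqP => E; move: g; rewrite E (negbTE bu).
have uv : u != v by rewrite eq_sym.
case: (s'vals s uv) => s'u s'v s'o.
set s' := (tperm u v * s)%g in s'u s'v s'o.
have [Hok HX] : okset s \subset okset s' /\ [set u; v] \subset okset s'.
  apply: update => //.
  - move=> i w'; rewrite !inE => /orP [] /eqP ->; rewrite ?s'u ?s'v.
      exact: vN.
    by apply: fresh_good g _; rewrite (inj_eq perm_inj).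
  - move=> i j; rewrite !inE => /orP [] /eqP -> /orP [] /eqP ->; rewrite ?eqxx // => _;
      rewrite ?s'u ?s'v.
      by rewrite good_ne.
    by rewrite eq_sym good_ne.
exists s'; apply: Q_lt1; apply/properP; split => //; exists u.
  by apply: (subsetP HX); rewrite !inE eqxx.
by rewrite inE.
Qed.

Lemma move4 (s : {perm 'I_n}) u : ~~ ok s u ->
  #|[set v | gr L v == 0]| + #|~: gset s| < n ->
  (forall v, gr L v != 0 -> #|~: gset s| + 2 < gr L v) ->
  exists s', Q s < Q s'.
Proof.
move=> nu H1 H2; have bu := bad_of_notok nu.
pose Lt := ~: [set v | gr L v == 0].
have cLt : #|Lt| + #|[set v | gr L v == 0]| = n.
  by rewrite addnC cardsC card_ord.
have [v [vL vN]] : exists v, v \in Lt /\ v \notin [set v | [exists w, L w (s w) == L u (s v)]].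
  apply: exists_diff; apply: leq_ltn_trans (nfr_card bu) _.
  clear H2; move: cLt H1; move: #|Lt| => a; move: #|[set v | gr L v == 0]| => b; move: #|~: gset s| => d'; lia.
have gv : gr L v != 0 by move: vL; rewrite !inE.
move: vN; rewrite inE negb_exists => /forallP vN.
have vu : v != u by apply/eqP => E; move: (vN u); rewrite E eqxx.
pose A := s @^-1: [set q | good L v q].
have cA : #|A| = gr L v by rewrite card_preimset //; exact: perm_inj.
pose E := [set w | L w (s u) == L u (s v)].
have cE : #|E| <= 1.
  by apply/card_le1_eqP => x y; rewrite !inE => /eqP <- /eqP /Lc.
pose Bad := [set w | [exists w', L w' (s w') == L w (s u)]] :|: E :|: [set v].
have cB : #|Bad| <= #|~: gset s| + 2.
  rewrite /Bad; apply: leq_trans (leq_card_setU _ _).1 _; rewrite cards1 -[2]/(1 + 1) addnA leq_add2r.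
  apply: leq_trans (leq_card_setU _ _).1 _.
  by apply: leq_add => //; exact: nfc_card.
have [w [wA wB]] : exists w, w \in A /\ w \notin Bad.
  apply: exists_diff; rewrite cA; apply: leq_ltn_trans cB _; exact: H2.
move: wA wB; rewrite !inE !negb_or negb_exists => gw /andP [/andP [/forallP wN wE] wv].
have wu : w != u by apply/eqP => E'; move: (wN u); rewrite E' eqxx.
have uv : u != v by rewrite eq_sym.
have uw : u != w by rewrite eq_sym.
have vw : v != w by rewrite eq_sym.
pose s' := (tperm u v * tperm u w * s)%g.
have s'u : s' u = s v by rewrite /s' !permM tpermL tpermD.
have s'v : s' v = s w by rewrite /s' !permM tpermR tpermL.
have s'w : s' w = s u by rewrite /s' !permM (tpermD uw vw) tpermR.
have s'o x : x \notin [set u; v; w] -> s' x = s x.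
  rewrite !inE !negb_or => /andP [/andP [xu xv] xw].
  by rewrite /s' !permM !tpermD // eq_sym.
have [Hok HX] : okset s \subset okset s' /\ [set u; v; w] \subset okset s'.
  apply: update => //.
  - move=> i w'; rewrite !inE => /orP [/orP []|] /eqP ->; rewrite ?s'u ?s'v ?s'w.
    + exact: vN.
    + by apply: fresh_good gw _; rewrite (inj_eq perm_inj).
    + exact: wN.
  - move=> i j; rewrite !inE => /orP [/orP []|] /eqP -> /orP [/orP []|] /eqP ->;
      rewrite ?eqxx // => _; rewrite ?s'u ?s'v ?s'w.
    + by rewrite good_ne.
    + by rewrite eq_sym.
    + by rewrite eq_sym good_ne.
    + by rewrite eq_sym good_ne.
    + done.
    + by rewrite good_ne.
exists s'; apply: Q_lt1; apply/properP; split => //; exists u.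
  by apply: (subsetP HX); rewrite !inE eqxx.
by rewrite inE.
Qed.

End CaseB.

Lemma caseB (T : eqType) (m : nat) (L : array T m.+1) :
  latin L -> 229 * m.+1 ^ 2 + 27 * m.+1 <= 256 * nsymbols L ->
  (forall i j, good L i j -> 202 * m + 256 < 256 * gr L i /\ 202 * m + 256 < 256 * gc L j) ->
  has_transversal L.
Proof.
move=> [Lr Lc] H Hl.
have lr i : gr L i != 0 -> 202 * m + 256 < 256 * gr L i.
  by rewrite -lt0n => /card_gt0P [q]; rewrite inE => /Hl [].
have lc j : gc L j != 0 -> 202 * m + 256 < 256 * gc L j.
  by rewrite -lt0n => /card_gt0P [p]; rewrite inE => /Hl [].
pose Hr := [set i | gr L i == 0]; pose Hc := [set j | gc L j == 0].
have k2 := two_k L.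
have gsr : #|goodset L| <= #|~: Hr| * m.+1.
  have sub : goodset L \subset setX (~: Hr) [set: 'I_m.+1].
    apply/subsetP => [[p q]]; rewrite !inE /= => g; rewrite andbT -lt0n.
    by apply/card_gt0P; exists q; rewrite inE.
  by have := subset_leq_card sub; rewrite cardsX cardsT card_ord.
have gsc : #|goodset L| <= m.+1 * #|~: Hc|.
  have sub : goodset L \subset setX [set: 'I_m.+1] (~: Hc).
    apply/subsetP => [[p q]]; rewrite !inE /= => g; rewrite -lt0n.
    by apply/card_gt0P; exists p; rewrite inE.
  by have := subset_leq_card sub; rewrite cardsX cardsT card_ord.
have cHr := cardsC Hr; have cHc := cardsC Hc; rewrite card_ord in cHr cHc.
have hrb : 128 * #|Hr| <= 27 * m.
  have : m.+1 * (128 * #|Hr|) <= m.+1 * (27 * m); last by rewrite leq_pmul2l.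
  move: H k2 gsr cHr; rewrite !expnS expn0 !muln1.
  move: (nsymbols L) #|goodset L| #|Hr| #|~: Hr| => k g a b; nia.
have hcb : 128 * #|Hc| <= 27 * m.
  have : m.+1 * (128 * #|Hc|) <= m.+1 * (27 * m); last by rewrite leq_pmul2l.
  move: H k2 gsc cHc; rewrite !expnS expn0 !muln1.
  move: (nsymbols L) #|goodset L| #|Hc| #|~: Hc| => k g a b; nia.
pose s := [arg max_(s > 1%g) Q L s].
have smax s' : Q L s' <= Q L s.
  by rewrite /s; case: arg_maxnP => // s0 _ H0; exact: H0.
have nomove s' : Q L s < Q L s' -> False by rewrite ltnNge smax.
have F1 w : ~~ good L w (s w) -> (gr L w == 0) || (gc L (s w) == 0).
  move=> bw; apply/negPn/negP; rewrite negb_or => /andP [g1 g2].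
  have := lr _ g1; have := lc _ g2 => h1 h2.
  have h3 : m.+1 < gr L w + gc L (s w) by move: h1 h2; move: (gr L w) (gc L (s w)) => a b; lia.
  by case: (move1 bw h3) => s' /nomove.
have db : #|~: gset L s| <= #|Hr| + #|Hc|.
  have sub : ~: gset L s \subset Hr :|: s @^-1: Hc.
    by apply/subsetP => w; rewrite !inE => /F1.
  apply: leq_trans (subset_leq_card sub) _; apply: leq_trans (leq_card_setU _ _).1 _.
  by rewrite card_preimset //; exact: perm_inj.
have allok u : ok L s u.
  apply/negPn/negP => nu; have bu := bad_of_notok nu.
  case: (boolP (gr L u == 0)) => hu; last first.
    have := lr _ hu => h1.
    have h3 : #|~: gset L s| < gr L u.
      by move: h1 db hrb hcb; move: (gr L u) #|~: gset L s| #|Hr| #|Hc| => a b c d; lia.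
    by case: (move2 Lr Lc nu h3) => s' /nomove.
  case: (boolP (gc L (s u) == 0)) => hcu; last first.
    have := lc _ hcu => h1.
    have h3 : #|~: gset L s| < gc L (s u).
      by move: h1 db hrb hcb; move: (gc L (s u)) #|~: gset L s| #|Hr| #|Hc| => a b c d; lia.
    by case: (move3 Lr nu h3) => s' /nomove.
  have hr1 : 0 < #|Hr| by apply/card_gt0P; exists u; rewrite inE.
  have h3 : #|Hr| + #|~: gset L s| < m.+1.
    by move: hr1 db hrb hcb; move: #|~: gset L s| #|Hr| #|Hc| => b c d; lia.
  have h4 v : gr L v != 0 -> #|~: gset L s| + 2 < gr L v.
    move=> /lr h1.
    by move: h1 hr1 db hrb hcb; move: (gr L v) #|~: gset L s| #|Hr| #|Hc| => a b c d; lia.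
  by case: (move4 Lr Lc nu h3 h4) => s' /nomove.
exists s => x y E; apply/eqP; apply: contraT => xy.
move: (allok x) => /forallP /(_ y) /implyP; rewrite eq_sym xy => /(_ isT).
by rewrite E eqxx.
Qed.

Theorem mainTheorem2 (T : eqType) (n : nat) (L : array T n) :
  latin L ->
  229 * n ^ 2 + 27 * n <= 256 * nsymbols L ->
  has_transversal L.
Proof.
elim: n L => [|m IH] L latL H.
  by exists 1%g => -[].
case: (boolP [exists i, exists j, good L i j && (256 * gr L i <= 202 * m + 256)]).
  by move=> /existsP [i] /existsP [j] /andP [g hg]; exact: caseA latL g IH H hg.
move=> n1.
case: (boolP [exists i, exists j, good L i j && (256 * gc L j <= 202 * m + 256)]).
  move=> /existsP [i] /existsP [j] /andP [g hg]; apply: trans_tr.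
  apply: (caseA (i := j) (j := i) (latin_tr latL)) => //.
  - by rewrite good_tr.
  - by rewrite nsym_tr.
  - by rewrite gr_tr.
move=> n2.
apply: caseB latL H _ => i j g; split; rewrite ltnNge; apply/negP => hg.
  by move/negP: n1; apply; apply/existsP; exists i; apply/existsP; exists j; rewrite g hg.
by move/negP: n2; apply; apply/existsP; exists i; apply/existsP; exists j; rewrite g hg.
Qed.
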